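(* Let $F$ be a graph and let $(G,\varphi)$ and $(G,\psi)$ be two $k$-token reconstructions of $F$. Then $(G,\varphi)$ and $(G,\psi)$ are equivalent if and only if $\mathcal{R}_\varphi=\mathcal{R}_\psi$ or $\mathcal{R}_\varphi=\overline{\mathcal{R}_\psi}$.
   Context: $F_k(G)$ is the graph on the $k$-subsets of $V(G)$ in which $A,B$ are adjacent iff $A\triangle B$ is an edge of $G$. A $k$-token reconstruction of $F$ is a pair $(G',\varphi)$ with $\varphi$ an isomorphism $F\to F_k(G')$. For an isomorphism $s$ between graphs, $\iota(s)$ maps a $k$-set $A$ to $\{s(v):v\in A\}$; $\mathfrak{c}$ maps a $k$-subset $A$ of $V(G)$ to $V(G)\setminus A$. Two $k$-token reconstructions $(G,\varphi),(G,\psi)$ of $F$ are equivalent if there is $s\in\operatorname{Aut}(G)$ with $\psi=\iota(s)\circ\varphi$ or $\psi=\mathfrak{c}\circ\iota(s)\circ\varphi$. For $u\in V(G)$ let $\kappa_G(u,k)=\{A\in V(F_k(G)):u\in A\}$. For a reconstruction $(G,\varphi)$ let $\mathcal{R}_\varphi=\{\varphi^{-1}(\kappa_G(u,k)):u\in V(G)\}$, and for a family $\mathcal{R}$ of subsets of $V(F)$ let $\overline{\mathcal{R}}=\{V(F)\setminus X:X\in\mathcal{R}\}$. *)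

(* Defs.v *)
From HB Require Import structures.
From mathcomp Require Import all_boot all_fingroup.
Set Implicit Arguments. Unset Strict Implicit. Unset Printing Implicit Defensive.

Definition simple_graph (T : finType) (e : rel T) : Prop :=
  symmetric e /\ irreflexive e.

(* Vertices of the k-token graph F_k(G): the k-subsets of V(G). *)
Definition ksub (T : finType) (k : nat) := {A : {set T} | #|A| == k}.
HB.instance Definition _ (T : finType) (k : nat) :=
  [Finite of ksub T k by <:].

Definition token_adj (T : finType) (e : rel T) (k : nat) (A B : ksub T k) : bool :=
  [exists a, exists b,
     e a b && ((val A :\: val B) :|: (val B :\: val A) == [set a; b])].

Definition token_reconstruction (TF TG : finType) (eF : rel TF) (eG : rel TG)
    (k : nat) (phi : TF -> ksub TG k) : Prop :=
  bijective phi /\ forall x y, eF x y = token_adj eG (phi x) (phi y).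

Definition is_aut (T : finType) (e : rel T) (s : {perm T}) : Prop :=
  forall a b, e (s a) (s b) = e a b.

(* Equivalence of two k-token reconstructions (G,phi), (G,psi):
   psi = iota(s) o phi, or psi = c o iota(s) o phi, for some s in Aut(G).
   Stated on the underlying sets. *)
Definition equiv_recon (TF TG : finType) (eG : rel TG) (k : nat)
    (phi psi : TF -> ksub TG k) : Prop :=
  exists s : {perm TG}, is_aut eG s /\
    ((forall x, val (psi x) = s @: val (phi x)) \/
     (forall x, val (psi x) = ~: (s @: val (phi x)))).

(* kappa_G(u,k) pulled back along phi : phi^{-1}(kappa_G(u,k)). *)
Definition kappa_pre (TF TG : finType) (k : nat) (phi : TF -> ksub TG k) (u : TG)
  : {set TF} := [set x | u \in val (phi x)].

Definition Rfam (TF TG : finType) (k : nat) (phi : TF -> ksub TG k) : {set {set TF}} :=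
  [set kappa_pre phi u | u : TG].

Definition Rbar (TF : finType) (R : {set {set TF}}) : {set {set TF}} :=
  [set ~: X | X in R].

(* Main.v *)
Require Import Defs.
From mathcomp Require Import all_boot all_fingroup.
From mathcomp Require Import zify.

Set Implicit Arguments. Unset Strict Implicit. Unset Printing Implicit Defensive.

Definition adjS (T : finType) (e : rel T) (X Y : {set T}) : bool :=
  [exists a, exists b, e a b && ((X :\: Y) :|: (Y :\: X) == [set a; b])].

Lemma sub_of_card (T : finType) (m : nat) (A : {set T}) :
  m <= #|A| -> exists C : {set T}, C \subset A /\ #|C| = m.
Proof.
elim: m => [|m IH] hm; first by exists set0; rewrite sub0set cards0.
have [C [CA cC]] := IH (ltnW hm).
have : 0 < #|A :\: C| by rewrite cardsD (setIidPr CA) cC subn_gt0.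
case/card_gt0P => x; rewrite inE => /andP [xC xA].
exists (x |: C); split; first by rewrite subUset sub1set xA.
by rewrite cardsU1 xC cC.
Qed.

Lemma adjS_pair (T : finType) (e : rel T) (a b : T) (C : {set T}) :
  symmetric e -> a != b -> a \notin C -> b \notin C ->
  adjS e (a |: C) (b |: C) = e a b.
Proof.
move=> se ab aC bC; rewrite /adjS.
have -> : (a |: C) :\: (b |: C) :|: (b |: C) :\: (a |: C) = [set a; b].
  apply/setP => z; rewrite !inE.
  case: (eqVneq z a) => [->|za]; first by rewrite (negPf ab) (negPf aC).
  case: (eqVneq z b) => [->|zb] /=; first by rewrite (negPf bC).
  by case: (z \in C).
apply/existsP/idP => [[a' /existsP [b' /andP [e' /eqP h]]]|eab].
  have : a \in [set a'; b'] by rewrite -h !inE eqxx.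
  have : b \in [set a'; b'] by rewrite -h !inE eqxx orbT.
  rewrite !inE => /orP [/eqP hb|/eqP hb] /orP [/eqP ha|/eqP ha]; subst.
  - by rewrite eqxx in ab.
  - by rewrite se.
  - by [].
  - by rewrite eqxx in ab.
by exists a; apply/existsP; exists b; rewrite eab eqxx.
Qed.

Lemma adjS_compl (T : finType) (e : rel T) (X Y : {set T}) :
  adjS e (~: X) (~: Y) = adjS e X Y.
Proof.
rewrite /adjS.
have -> : ~: X :\: ~: Y :|: ~: Y :\: ~: X = X :\: Y :|: Y :\: X.
  by apply/setP => z; rewrite !inE; case: (z \in X); case: (z \in Y).
by [].
Qed.

Lemma adjS_perm (T : finType) (e : rel T) (s : {perm T}) (a b : T) (C : {set T}) :
  symmetric e -> a != b -> a \notin C -> b \notin C ->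
  adjS e (s @: (a |: C)) (s @: (b |: C)) = e (s a) (s b).
Proof.
move=> se ab aC bC; rewrite !imsetU1 adjS_pair //.
- by rewrite (inj_eq perm_inj).
- by rewrite mem_imset //; exact: perm_inj.
- by rewrite mem_imset //; exact: perm_inj.
Qed.

Lemma two_sets (T : finType) (k : nat) (a b : T) :
  0 < k -> k < #|T| -> a != b ->
  exists C : {set T}, [/\ a \notin C, b \notin C, #|a |: C| = k & #|b |: C| = k].
Proof.
move=> k0 kn ab.
have hc : k.-1 <= #|~: [set a; b]|.
  rewrite cardsCs setCK cards2 ab; move: k0 kn; case: k => // k _ /= kn.
  lia.
have [C [sC cC]] := sub_of_card hc.
have aC : a \notin C by apply/negP => /(subsetP sC); rewrite !inE eqxx.
have bC : b \notin C by apply/negP => /(subsetP sC); rewrite !inE eqxx orbT.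
exists C; split => //; rewrite cardsU1 ?aC ?bC cC; by case: k k0 {kn hc cC}.
Qed.

Lemma kappa_inj (TF TG : finType) (k : nat) (phi : TF -> ksub TG k) :
  bijective phi -> 0 < k -> k < #|TG| -> injective (kappa_pre phi).
Proof.
move=> [phi' phiK phiK'] k0 kn u v huv; apply/eqP; apply/negP => /negP uv.
have [C [uC vC cu cv]] := two_sets k0 kn uv.
have hX : #|u |: C| == k by apply/eqP.
set A := (exist _ (u |: C) hX : ksub TG k).
have : phi' A \in kappa_pre phi u by rewrite inE phiK' /= setU11.
rewrite huv inE phiK' /= !inE (negPf vC) orbF eq_sym.
by rewrite (negPf uv).
Qed.

Lemma aut_from (TF TG : finType) (eF : rel TF) (eG : rel TG) (k : nat)
    (phi psi : TF -> ksub TG k) (s : {perm TG}) (g : {set TG} -> {set TG}) :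
  simple_graph eG ->
  token_reconstruction eF eG phi -> token_reconstruction eF eG psi ->
  0 < k -> k < #|TG| ->
  (forall X Y, adjS eG (g X) (g Y) = adjS eG (s @: X) (s @: Y)) ->
  (forall x, val (psi x) = g (val (phi x))) -> is_aut eG s.
Proof.
move=> [se ie] [[phi' phiK phiK'] ephi] [_ epsi] k0 kn hg hpsi a b.
case: (eqVneq a b) => [->|ab]; first by rewrite !ie.
have [C [aC bC ca cb]] := two_sets k0 kn ab.
have hX : #|a |: C| == k by apply/eqP.
have hY : #|b |: C| == k by apply/eqP.
set A := (exist _ (a |: C) hX : ksub TG k).
set B := (exist _ (b |: C) hY : ksub TG k).
have e1 := ephi (phi' A) (phi' B).
have e2 := epsi (phi' A) (phi' B).
rewrite e1 /token_adj in e2.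
rewrite !hpsi !phiK' /= in e2.
have e3 : adjS eG (a |: C) (b |: C) = adjS eG (g (a |: C)) (g (b |: C)) by exact: e2.
by rewrite hg adjS_perm // adjS_pair // in e3.
Qed.

Theorem proposition13 (TF TG : finType) (eF : rel TF) (eG : rel TG) (k : nat)
    (phi psi : TF -> ksub TG k) :
  simple_graph eF -> simple_graph eG ->
  token_reconstruction eF eG phi -> token_reconstruction eF eG psi ->
  equiv_recon eG phi psi <-> (Rfam phi = Rfam psi \/ Rfam phi = Rbar (Rfam psi)).
Proof.
move=> sF sG rphi rpsi; split.
  case=> s [aut [H|H]].
    left; apply/setP => X; apply/imsetP/imsetP => [[u _ ->]|[v _ ->]].
      exists (s u) => //; apply/setP => x; rewrite !inE H mem_imset //.
      exact: perm_inj.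
    exists ((s^-1)%g v) => //; apply/setP => x; rewrite !inE H.
    by rewrite -{1}(permKV s v) mem_imset //; exact: perm_inj.
  right; apply/setP => X; apply/imsetP/imsetP => [[u _ ->]|[Y /imsetP [v _ ->] ->]].
    exists (kappa_pre psi (s u)); first by apply/imsetP; exists (s u).
    apply/setP => x; rewrite !inE H inE mem_imset ?negbK //; exact: perm_inj.
  exists ((s^-1)%g v) => //; apply/setP => x; rewrite !inE H inE.
  by rewrite -{1}(permKV s v) mem_imset ?negbK //; exact: perm_inj.
have im1 : forall X : {set TG}, (1%g : {perm TG}) @: X = X.
  move=> X; apply/setP => z; rewrite -{1}(perm1 z) mem_imset //; exact: perm_inj.
have [k0|k0] := posnP k.
  move=> _; exists 1%g; split; first by move=> a b; rewrite !perm1.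
  left => x; rewrite im1; subst k.
  by rewrite (cards0_eq (eqP (valP (psi x)))) (cards0_eq (eqP (valP (phi x)))).
have [kn|kn] := leqP #|TG| k.
  move=> _; exists 1%g; split; first by move=> a b; rewrite !perm1.
  have hT : forall A : ksub TG k, val A = setT.
    move=> A; apply/eqP; rewrite eqEcard subsetT cardsT (eqP (valP A)) //.
  by left => x; rewrite im1 !hT.
have kinj := kappa_inj (proj1 rphi) k0 kn.
case=> HR.
  have ex : forall u, exists v, kappa_pre phi u = kappa_pre psi v.
    move=> u; have : kappa_pre phi u \in Rfam phi by apply/imsetP; exists u.
    by rewrite HR => /imsetP [v _ ->]; exists v.
  have [f hf] := fin_all_exists ex.
  have finj : injective f by move=> u v fuv; apply: kinj; rewrite !hf fuv.
  pose s := perm finj.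
  have H : forall x, val (psi x) = s @: val (phi x).
    move=> x; apply/setP => z; rewrite -(permKV s z) mem_imset; last exact: perm_inj.
    have := hf ((s^-1)%g z) => /setP /(_ x); rewrite !inE permE => ->.
    by rewrite permE.
  exists s; split; last by left.
  apply: (aut_from (g := fun X => s @: X)) rphi rpsi k0 kn _ H => //.
have ex : forall u, exists v, kappa_pre phi u = ~: kappa_pre psi v.
  move=> u; have : kappa_pre phi u \in Rfam phi by apply/imsetP; exists u.
  by rewrite HR => /imsetP [Y /imsetP [v _ ->] ->]; exists v.
have [f hf] := fin_all_exists ex.
have finj : injective f.
  by move=> u v fuv; apply: kinj; rewrite !hf fuv.
pose s := perm finj.
have H : forall x, val (psi x) = ~: (s @: val (phi x)).
  move=> x; apply/setP => z; rewrite inE -(permKV s z) mem_imset; last exact: perm_inj.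
  have := hf ((s^-1)%g z) => /setP /(_ x); rewrite !inE permE => ->.
  by rewrite negbK permE.
exists s; split; last by right.
apply: (aut_from (g := fun X => ~: (s @: X))) rphi rpsi k0 kn _ H => //.
by move=> X Y; rewrite adjS_compl.
Qed.
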